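(* Let $N\ge1$ be an integer and $\alpha,\beta,\gamma,\eta,\rho$ complex constants with $\beta\neq0$, $\gamma\neq0$, $\gamma\neq1$, and set $a=\alpha+\frac{\eta\rho}{1-\gamma}$, $b=\frac{\beta\rho}{1-\gamma}$, assuming $a\neq0$. For $N$-tuples $\underline z=(z_1,\dots,z_N)$, $\underline{\tilde z}=(\tilde z_1,\dots,\tilde z_N)$ define $$\hat g_n(\underline z,\underline{\tilde z})=a^{1-N}(\eta\tilde z_n+\beta)\left[\prod_{j=1}^{N}\frac{\tilde z_n-a z_j-b}{\eta z_j+\beta}\right]\left[\prod_{j=1,\,j\neq n}^{N}\frac{\eta\tilde z_j+a\beta-b\eta}{\tilde z_n-\tilde z_j}\right],\qquad n=1,\dots,N.$$ Let $\big(z_1(\ell),\dots,z_N(\ell)\big)$, $\ell=0,1,2,\dots$, be a sequence of $N$-tuples of complex numbers such that for every $\ell\ge0$ the numbers $z_1(\ell+2),\dots,z_N(\ell+2)$ are (in some order, with multiplicity) the $N$ roots in $z$ of $$\sum_{k=1}^{N}\frac{\hat g_k\big(\underline z(\ell),\underline z(\ell+1)\big)}{z-a\,z_k(\ell+1)-b}=\frac1\gamma .$$ Let $Z(\ell)=\mathrm{diag}\big(z_1(\ell),\dots,z_N(\ell)\big)$, $U(0)=Z(0)$, let $M(0)$ be the $N\times N$ matrix with entries $M_{nm}(0)=\hat g_m\big(\underline z(0),\underline z(1)\big)/\big(z_m(1)-a z_n(0)-b\big)$, and $$V(0)=[\eta Z(0)+\beta I]^{-1}\big\{M(0)Z(1)[M(0)]^{-1}-\alpha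 Z(0)\big\},$$ $A=\eta V(0)-\frac{\eta}{\beta}b\,I$, $B=\beta V(0)-bI$, $P(\ell_1,\ell_2)=\prod_{j=\ell_1}^{\ell_2}(A\gamma^{j}+aI)$ (equal to $I$ if $\ell_1>\ell_2$; the factors commute), and $$U(\ell)=U(0)P(0,\ell-1)+\sum_{k=1}^{\ell}\big(B\gamma^{k-1}+bI\big)P(k,\ell-1)$$ (the sum being $0$ if $\ell=0$). Then for every $\ell\ge0$ the multiset $\{z_1(\ell),\dots,z_N(\ell)\}$ coincides with the multiset of eigenvalues of $U(\ell)$.
   Context: $I$ is the $N\times N$ identity matrix. Throughout, data are assumed generic: for every $\ell$ the $z_n(\ell)$ are pairwise distinct, all denominators appearing are nonzero, and the matrices $M(0)$ and $\eta Z(0)+\beta I$ are invertible. *)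

(* Defs.v *)
(* Complex constants are taken in an arbitrary
   numClosedFieldType C (e.g. complex R, algC). *)
From mathcomp Require Import all_boot all_order all_algebra.
Set Implicit Arguments. Unset Strict Implicit. Unset Printing Implicit Defensive.
Import Order.TTheory GRing.Theory Num.Theory.
Local Open Scope ring_scope.

Section Defs.
Variables (C : numClosedFieldType) (N : nat).

Definition ghat (a b eta beta : C) (z zt : 'I_N -> C) (n : 'I_N) : C :=
  a ^- N.-1 * (eta * zt n + beta)
  * (\prod_(j < N) ((zt n - a * z j - b) / (eta * z j + beta)))
  * (\prod_(j < N | j != n) ((eta * zt j + a * beta - b * eta) / (zt n - zt j))).

Definition Zmat (v : 'I_N -> C) : 'M[C]_N := diag_mx (\row_n v n).

Definition M0 (a b eta beta : C) (z : nat -> 'I_N -> C) : 'M[C]_N :=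
  \matrix_(n, m) (ghat a b eta beta (z 0%N) (z 1%N) m
                   / (z 1%N m - a * z 0%N n - b)).

Definition V0 (alpha a b eta beta : C) (z : nat -> 'I_N -> C) : 'M[C]_N :=
  invmx (eta *: Zmat (z 0%N) + beta%:M)
  *m (M0 a b eta beta z *m Zmat (z 1%N) *m invmx (M0 a b eta beta z)
      - alpha *: Zmat (z 0%N)).

Definition Amat (alpha a b eta beta : C) z : 'M[C]_N :=
  eta *: V0 alpha a b eta beta z - (eta / beta * b)%:M.
Definition Bmat (alpha a b eta beta : C) z : 'M[C]_N :=
  beta *: V0 alpha a b eta beta z - b%:M.

(* Pex l1 l = P(l1, l-1) = prod_{j=l1}^{l-1} (A gamma^j + a I); identity if l1 >= l *)
Definition Pex (alpha a b eta beta gamma : C) z (l1 l : nat) : 'M[C]_N :=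
  \big[mulmx/1%:M]_(l1 <= j < l) (gamma ^+ j *: Amat alpha a b eta beta z + a%:M).

Definition Umat (alpha a b eta beta gamma : C) z (l : nat) : 'M[C]_N :=
  Zmat (z 0%N) *m Pex alpha a b eta beta gamma z 0 l
  + \sum_(1 <= k < l.+1)
      ((gamma ^+ k.-1 *: Bmat alpha a b eta beta z + b%:M)
         *m Pex alpha a b eta beta gamma z k l).

End Defs.

(* Main.v *)
Require Import Defs.
From mathcomp Require Import all_boot all_order all_algebra ring.
Set Implicit Arguments. Unset Strict Implicit. Unset Printing Implicit Defensive.
Import Order.TTheory GRing.Theory Num.Theory.
Local Open Scope ring_scope.
Section P1.
Variables (C : numClosedFieldType) (N : nat).
Implicit Types (A B P Q : 'M[C]_N).

Lemma char_poly_conj P A : P \in unitmx ->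
  char_poly (P *m A *m invmx P) = char_poly A.
Proof.
move=> uP; rewrite /char_poly.
have PP : map_mx (@polyC C) P *m map_mx polyC (invmx P) = 1%:M.
  by rewrite -map_mxM mulmxV // map_mx1.
have -> : char_poly_mx (P *m A *m invmx P) =
   map_mx polyC P *m char_poly_mx A *m map_mx polyC (invmx P).
  rewrite /char_poly_mx !map_mxM mulmxBr mulmxBl mul_mx_scalar -scalemxAl.
  by rewrite PP scalemx1.
rewrite !det_mulmx mulrAC -det_mulmx PP det1 mul1r.
by [].
Qed.

Lemma char_poly_Zmat (v : 'I_N -> C) :
  char_poly (Zmat v) = \prod_(n < N) ('X - (v n)%:P).
Proof.
rewrite char_poly_trig ?diag_mx_is_trig //.
by apply: eq_bigr => i _; rewrite !mxE eqxx mulr1n.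
Qed.

Lemma mulmx_subscalar_eig Q B (w : 'I_N -> C) c :
  Q *m B = Zmat w *m Q ->
  Q *m (B - c%:M) = Zmat (fun i => w i - c) *m Q.
Proof.
move=> QB; rewrite mulmxBr QB mul_mx_scalar.
rewrite /Zmat !mul_diag_mx; apply/matrixP => i j; rewrite !mxE.
by rewrite mulrBl.
Qed.

Lemma eigen_unit B Q (w : 'I_N -> C) : injective w ->
  (forall i, row i Q != 0) -> Q *m B = Zmat w *m Q -> Q \in unitmx.
Proof.
move=> wi rQ QB; rewrite unitmxE unitfE; apply/negP => /det0P [v v0 vQ].
have [k vk] : exists k, v 0 k != 0.
  apply/existsP; apply: contraNT v0; rewrite negb_exists => /forallP H.
  apply/eqP/matrixP => i j; rewrite ord1 mxE; exact/eqP/negPn/H.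
have QL : forall s : seq 'I_N,
   Q *m \big[mulmx/1%:M]_(j <- s | j != k) (B - (w j)%:M) =
   Zmat (fun i => \prod_(j <- s | j != k) (w i - w j)) *m Q.
  elim => [|j s IH].
    rewrite big_nil mulmx1; apply/matrixP => i c.
    by rewrite mul_diag_mx !mxE big_nil mul1r.
  rewrite big_cons; case: ifP => jk.
    rewrite mulmxA (mulmx_subscalar_eig _ QB) -mulmxA IH mulmxA /Zmat mulmx_diag.
    congr (diag_mx _ *m _); apply/rowP => i; rewrite !mxE big_cons jk //.
  rewrite IH /Zmat; congr (diag_mx _ *m _); apply/rowP => i.
  by rewrite !mxE big_cons jk.
have := congr1 (mulmx^~ (\big[mulmx/1%:M]_(j <- index_enum 'I_N | j != k)
                   (B - (w j)%:M))) vQ.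
rewrite mul0mx -mulmxA QL mulmxA.
set pi := fun i => _.
have -> : v *m Zmat pi = (v 0 k * pi k) *: delta_mx 0 k.
  apply/matrixP => i j; rewrite ord1 mul_mx_diag !mxE eqxx /=.
  have [->|jk] := eqVneq j k; first by rewrite mulr1.
  rewrite mulr0 /pi (bigD1 j) //= subrr mul0r mulr0 //.
rewrite -scalemxAl -rowE => /eqP; rewrite scalemx_eq0 (negbTE (rQ k)) orbF.
rewrite mulf_eq0 (negbTE vk) /= /pi; apply/negP/prodf_neq0 => j jk.
by rewrite subr_eq0; apply: contra jk => /eqP/wi ->.
Qed.

End P1.
Section P2.
Variables (C : numClosedFieldType) (N : nat).
Variables (alpha a b eta beta gamma : C) (z : nat -> 'I_N -> C).
Local Notation A := (Amat alpha a b eta beta z).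
Local Notation B := (Bmat alpha a b eta beta z).
Local Notation Px := (Pex alpha a b eta beta gamma z).
Local Notation U := (Umat alpha a b eta beta gamma z).

Lemma Pex_nil k l : (l <= k)%N -> Px k l = 1%:M.
Proof. by move=> lk; rewrite /Pex big_geq. Qed.

Lemma Pex_recr k l : (k <= l)%N ->
  Px k l.+1 = Px k l *m (gamma ^+ l *: A + a%:M).
Proof.
move=> kl; rewrite /Pex.
have -> : index_iota k l.+1 = rcons (index_iota k l) l.
  by rewrite /index_iota subSn // -addn1 iotaD cats1 subnKC.
elim: (index_iota k l) => [|x s IH]; rewrite /= ?big_cons ?big_nil.
  by rewrite mul1mx mulmx1.
by rewrite IH mulmxA.
Qed.

Lemma Umat0 : U 0 = Zmat (z 0%N).
Proof. by rewrite /Umat Pex_nil // mulmx1 big_geq // addr0. Qed.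

Lemma UmatS l : U l.+1 = U l *m (gamma ^+ l *: A + a%:M) + (gamma ^+ l *: B + b%:M).
Proof.
have sumr : forall (F : nat -> 'M[C]_N) m n, (m <= n)%N ->
   \sum_(m <= k < n.+1) F k = \sum_(m <= k < n) F k + F n.
  by move=> F m n mn; rewrite big_nat_recr.
rewrite /Umat sumr //= (@Pex_nil l.+1 l.+1) // mulmx1 Pex_recr // mulmxDl mulmxA addrA.
congr (_ + _ + _); rewrite mulmx_suml; apply: eq_big_nat => k /andP [k1 kl].
by rewrite Pex_recr ?mulmxA // -ltnS.
Qed.

Lemma UmatS' l : beta != 0 ->
  U l.+1 = a *: U l + b%:M + (eta *: U l + beta%:M) *m (gamma ^+ l / beta *: B).
Proof.
move=> b0; rewrite UmatS; move: (U l) => u.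
have -> : A = (eta / beta) *: B.
  by rewrite /Amat /Bmat scalerBr scalerA divfK // scale_scalar_mx.
rewrite mulmxDr mulmxDl mul_mx_scalar -!scalemxAr -scalemxAl mul_scalar_mx !scalerA.
rewrite mulrCA mulrA divfK // -!addrA.
have -> : eta * gamma ^+ l / beta = gamma ^+ l / beta * eta by ring.
rewrite addrCA; congr (_ + _); by rewrite addrA addrC.
Qed.

End P2.
Section P3.
Variables (C : numClosedFieldType) (N : nat).

Lemma count_neq (m : 'I_N) : count (fun j => j != m) (index_enum 'I_N) = N.-1.
Proof.
have := cardC1 m; rewrite card_ord cardE /enum_mem size_filter => <-.
by apply: eq_count => j; rewrite !inE.
Qed.

Lemma size_prodX (F : 'I_N -> C) (m : 'I_N) :
  size (\prod_(j < N | j != m) ('X - (F j)%:P)) = N.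
Proof.
rewrite -big_filter size_prod_XsubC size_filter count_neq.
by case: N m => [[]|].
Qed.

Lemma coef_prodX (F : 'I_N -> C) (m : 'I_N) :
  (\prod_(j < N | j != m) ('X - (F j)%:P))`_(N.-1) = 1.
Proof.
apply: (etrans _ (monicP (monic_prod_XsubC (index_enum _) (fun j => j != m) F))).
by rewrite lead_coefE size_prodX.
Qed.

Lemma card_neq (m : 'I_N) : #|[pred j : 'I_N | j != m]| = N.-1.
Proof.
have := cardC1 m; rewrite card_ord => <-.
by apply: eq_card => j; rewrite !inE.
Qed.

Lemma horner_prodX (F : 'I_N -> C) (P : pred 'I_N) t :
  (\prod_(j | P j) ('X - (F j)%:P)).[t] = \prod_(j | P j) (t - F j).
Proof. by rewrite horner_prod; apply: eq_bigr => j _; exact: hornerXsubC. Qed.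

Lemma lagrange_interp (x : 'I_N -> C) (p : {poly C}) : injective x ->
  (size p <= N)%N ->
  p = \sum_(m < N) (p.[x m] / \prod_(j < N | j != m) (x m - x j))
         *: \prod_(j < N | j != m) ('X - (x j)%:P).
Proof.
move=> xi sp; apply/eqP; rewrite -subr_eq0; apply/eqP.
apply: (@roots_geq_poly_eq0 _ _ [seq x i | i <- enum 'I_N]).
- apply/allP => r /mapP [k _ ->]; rewrite rootE hornerD hornerN horner_sum.
  apply/eqP; rewrite (bigD1 k) //= [X in _ - (_ + X)]big1 ?addr0.
    rewrite hornerZ horner_prodX.
    rewrite divfK ?subrr //; apply/prodf_neq0 => j jk.
    by rewrite subr_eq0; apply: contra jk => /eqP/xi ->.
  move=> m mk; rewrite hornerZ horner_prodX [X in _ * X](bigD1 k) 1?eq_sym //=.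
  by rewrite subrr mul0r mulr0.
- by rewrite (map_inj_uniq xi) enum_uniq.
- rewrite size_map size_enum_ord (leq_trans (size_polyD _ _)) // geq_max sp /=.
  rewrite size_polyN; apply: (big_ind (fun q : {poly C} => (size q <= N)%N)).
  + by rewrite size_poly0.
  + by move=> q1 q2 h1 h2; rewrite (leq_trans (size_polyD _ _)) // geq_max h1.
  + by move=> m _; rewrite (leq_trans (size_scale_leq _ _)) // size_prodX.
Qed.

Lemma lagrange_ident (x e : 'I_N -> C) (n : 'I_N) (eta c : C) : injective x ->
  \sum_(m < N) (\prod_(j < N | j != n) (x m - e j))
      * (\prod_(j < N | j != m) (eta * x j + c))
      / \prod_(j < N | j != m) (x m - x j)
  = \prod_(j < N | j != n) (c + eta * e j).
Proof.
move=> xi.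
set f := \prod_(j < N | j != n) ('X - (e j)%:P).
have sf : size f = N by rewrite size_prodX.
have fx : forall t, f.[t] = \prod_(j < N | j != n) (t - e j).
  by move=> t; rewrite horner_prodX.
have L := lagrange_interp xi (eq_leq sf).
have [->|e0] := eqVneq eta 0.
  have Hc : forall (s : 'I_N -> C) k,
      \prod_(j < N | j != k) (0 * s j + c) = c ^+ N.-1.
    move=> s k; rewrite -(card_neq k) -prodr_const.
    by apply: eq_bigr => j _; rewrite mul0r add0r.
  under eq_bigr do rewrite Hc.
  have -> : \prod_(j < N | j != n) (c + 0 * e j) = c ^+ N.-1.
    by rewrite -(card_neq n) -prodr_const; apply: eq_bigr => j _; rewrite mul0r addr0.
  have f1 : f`_(N.-1) = 1.
    by rewrite -sf -lead_coefE; apply/monicP/monic_prod_XsubC.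
  transitivity (c ^+ N.-1 * f`_(N.-1)); last by rewrite f1 mulr1.
  rewrite {1}L coef_sum mulr_sumr; apply: eq_bigr => m _.
  rewrite coefZ coef_prodX.
  by rewrite fx mulr1 mulrAC mulrC.
set t := - c / eta.
have Hp : forall (s : 'I_N -> C) (k : 'I_N),
   \prod_(j < N | j != k) (eta * s j + c) = (- eta) ^+ N.-1 * \prod_(j < N | j != k) (t - s j).
  move=> s k; rewrite -(card_neq k) -prodr_const -big_split /=.
  by apply: eq_bigr => j _; rewrite /t; field.
under [RHS]eq_bigr do rewrite addrC.
rewrite Hp -fx {1}L horner_sum mulr_sumr; apply: eq_bigr => m _.
rewrite Hp hornerZ !horner_prodX.
by ring.
Qed.

Lemma F1 (a b eta beta : C) (y x : 'I_N -> C) (n : 'I_N) : injective x -> a != 0 ->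
  (forall j, eta * y j + beta != 0) -> (forall m, eta * x m + beta != 0) ->
  (forall m j, x m - a * y j - b != 0) ->
  \sum_(m < N) ghat a b eta beta y x m / (x m - a * y n - b) / (eta * x m + beta)
  = (eta * y n + beta)^-1.
Proof.
move=> xi a0 hy hx hxy; rewrite /ghat.
have Dy : \prod_(j < N) (eta * y j + beta) != 0 by apply/prodf_neq0.
have Dx : forall m, \prod_(j < N | j != m) (x m - x j) != 0.
  move=> m; apply/prodf_neq0 => j jm.
  by rewrite subr_eq0; apply: contra jm => /eqP/xi ->.
have E1 : forall m, \prod_(j < N) ((x m - a * y j - b) / (eta * y j + beta)) =
   (x m - a * y n - b) * \prod_(j < N | j != n) (x m - (a * y j + b))
     / \prod_(j < N) (eta * y j + beta).
  move=> m; rewrite prodf_div (bigD1 n) //=; congr (_ * _ / _).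
  by apply: eq_bigr => j _; rewrite opprD addrA.
have E2 : forall m, \prod_(j < N | j != m)
     ((eta * x j + a * beta - b * eta) / (x m - x j)) =
   \prod_(j < N | j != m) (eta * x j + (a * beta - b * eta))
     / \prod_(j < N | j != m) (x m - x j).
  by move=> m; rewrite prodf_div; congr (_ / _); apply: eq_bigr => j _; rewrite addrA.
transitivity (a ^- N.-1 / \prod_(j < N) (eta * y j + beta) *
  \sum_(m < N) (\prod_(j < N | j != n) (x m - (a * y j + b)))
      * (\prod_(j < N | j != m) (eta * x j + (a * beta - b * eta)))
      / \prod_(j < N | j != m) (x m - x j)).
  rewrite mulr_sumr; apply: eq_bigr => m _; rewrite E1 E2.
  have := Dx m; have := hxy m n; have := hx m; move: Dy.
  set P1 := \prod_(j < N) _; set P2 := \prod_(j < N | j != m) (x m - x j).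
  move=> h1 h2 h3 h4; field.
  by rewrite h1 h2 h3 h4 expf_neq0.
rewrite lagrange_ident //.
have -> : \prod_(j < N | j != n) (a * beta - b * eta + eta * (a * y j + b)) =
   a ^+ N.-1 * \prod_(j < N | j != n) (eta * y j + beta).
  rewrite -(card_neq n) -prodr_const -big_split /=.
  by apply: eq_bigr => j _; ring.
rewrite (bigD1 n) //=.
have := hy n; have : \prod_(j < N | j != n) (eta * y j + beta) != 0.
  by apply/prodf_neq0.
move=> h1 h2; field.
by rewrite h1 h2 expf_neq0.
Qed.

End P3.
Section P5.
Variables (C : numClosedFieldType) (N : nat).
Implicit Types (A B P Q : 'M[C]_N).

Lemma Zmat_ext (f g : 'I_N -> C) : (forall n, f n = g n) -> Zmat f = Zmat g.
Proof. by move=> fg; rewrite /Zmat; congr diag_mx; apply/rowP => i; rewrite !mxE fg. Qed.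

Lemma Zmat_mul (f g : 'I_N -> C) : Zmat f *m Zmat g = Zmat (fun n => f n * g n).
Proof. by rewrite /Zmat mulmx_diag; congr diag_mx; apply/rowP => i; rewrite !mxE. Qed.

Lemma Zmat1 : Zmat (fun _ => 1) = 1%:M :> 'M[C]_N.
Proof. by apply/matrixP => i j; rewrite !mxE. Qed.

Lemma Zmat_lin (f : 'I_N -> C) (c d : C) :
  c *: Zmat f + d%:M = Zmat (fun n => c * f n + d).
Proof. by apply/matrixP => i j; rewrite !mxE; case: eqP => _; rewrite ?mulr1n ?mulr0n ?mulr0 ?addr0. Qed.

Lemma Zmat_tr (f : 'I_N -> C) : (Zmat f)^T = Zmat f.
Proof. by rewrite /Zmat tr_diag_mx. Qed.

Lemma invmxM' A B : A \in unitmx -> B \in unitmx ->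
  invmx (A *m B) = invmx B *m invmx A.
Proof.
move=> uA uB; have uAB : A *m B \in unitmx by rewrite unitmx_mul uA uB.
rewrite -[RHS]mul1mx -(mulVmx uAB) -!mulmxA (mulmxA B) (mulmxV uB) mul1mx.
by rewrite (mulmxV uA) mulmx1.
Qed.

Definition cj Q A := invmx Q *m A *m Q.

Lemma cjD Q A B : cj Q (A + B) = cj Q A + cj Q B.
Proof. by rewrite /cj mulmxDr mulmxDl. Qed.
Lemma cjZ Q c A : cj Q (c *: A) = c *: cj Q A.
Proof. by rewrite /cj -scalemxAr -scalemxAl. Qed.
Lemma cjM Q A B : Q \in unitmx -> cj Q (A *m B) = cj Q A *m cj Q B.
Proof. by move=> uQ; rewrite /cj !mulmxA mulmxK. Qed.
Lemma cjC Q c : Q \in unitmx -> cj Q c%:M = c%:M.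
Proof. by move=> uQ; rewrite /cj mul_mx_scalar -scalemxAl mulVmx // scalemx1. Qed.
Lemma cjK Q A : Q \in unitmx -> Q *m cj Q A *m invmx Q = A.
Proof. by move=> uQ; rewrite /cj !mulmxA mulmxV // mul1mx mulmxK. Qed.
Lemma cjV Q A : Q \in unitmx -> cj Q (Q *m A *m invmx Q) = A.
Proof. by move=> uQ; rewrite /cj !mulmxA mulVmx // mul1mx mulmxKV. Qed.

End P5.
Section P6.
Variables (C : numClosedFieldType) (N : nat) (a b eta beta gamma : C).

Definition Mc (y x : 'I_N -> C) : 'M[C]_N :=
  \matrix_(n, m) (ghat a b eta beta y x m / (x m - a * y n - b)).
Definition Jm (y x : 'I_N -> C) : 'M[C]_N := \matrix_(n, m) ghat a b eta beta y x m.

Lemma C1 (y x : 'I_N -> C) : (forall m n, x m - a * y n - b != 0) ->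
  Mc y x *m Zmat x - a *: (Zmat y *m Mc y x) - b *: Mc y x = Jm y x.
Proof.
move=> hd; apply/matrixP => n m; rewrite /Zmat mul_mx_diag mul_diag_mx !mxE.
by field; apply: hd.
Qed.

Lemma C2 (y x : 'I_N -> C) : injective x -> a != 0 ->
  (forall j, eta * y j + beta != 0) -> (forall m, eta * x m + beta != 0) ->
  (forall m j, x m - a * y j - b != 0) ->
  Mc y x *m Zmat (fun m => (eta * x m + beta)^-1) *m Jm y x
  = Zmat (fun n => (eta * y n + beta)^-1) *m Jm y x.
Proof.
move=> xi a0 hy hx hxy; apply/matrixP => n m.
rewrite /Zmat mul_mx_diag mul_diag_mx !mxE -(F1 n xi a0 hy hx hxy) mulr_suml.
by apply: eq_bigr => k _; rewrite !mxE.
Qed.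

Lemma step (y x w : 'I_N -> C) (P G Y X W : 'M[C]_N) :
  injective x -> injective w -> a != 0 -> gamma != 0 ->
  (forall j, eta * y j + beta != 0) -> (forall m, eta * x m + beta != 0) ->
  (forall m j, x m - a * y j - b != 0) -> (forall m j, w m - a * x j - b != 0) ->
  (forall n, \sum_(k < N) ghat a b eta beta y x k / (w n - a * x k - b) = gamma^-1) ->
  (forall m, ghat a b eta beta x w m != 0) ->
  P \in unitmx -> Mc y x \in unitmx ->
  Y = P *m Zmat y *m invmx P ->
  X = (P *m Mc y x) *m Zmat x *m invmx (P *m Mc y x) ->
  X = a *: Y + b%:M + (eta *: Y + beta%:M) *m G ->
  W = a *: X + b%:M + (eta *: X + beta%:M) *m (gamma *: G) ->
  Mc x w \in unitmx /\
  W = (P *m Mc y x *m Mc x w) *m Zmat w *m invmx (P *m Mc y x *m Mc x w).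
Proof.
move=> xi wi a0 g0 hy hx hxy hwx hrec hg uP uM eY eX rX rW.
set M := Mc y x; set Q := P *m M.
have uQ : Q \in unitmx by rewrite unitmx_mul uP uM.
set Y' := cj Q Y; set G' := cj Q G.
have eY' : M *m Y' = Zmat y *m M.
  rewrite /Y' /cj /Q invmxM' // eY !mulmxA mulmxV // mul1mx mulVmx // mul1mx.
  by rewrite mulmxKV.
have eX' : cj Q X = Zmat x by rewrite eX cjV.
have r1 : (eta *: Y' + beta%:M) *m G' = Zmat x - a *: Y' - b%:M.
  rewrite -eX' rX !cjD !cjZ cjM // !cjD !cjZ !cjC // -/Y' -/G'.
  by rewrite [a *: Y' + _ + _]addrC addrA (addrAC _ b%:M) !addrK.
have h1 : (eta *: Zmat y + beta%:M) *m M *m G' = Jm y x.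
  have -> : (eta *: Zmat y + beta%:M) *m M = M *m (eta *: Y' + beta%:M).
    by rewrite mulmxDl mulmxDr -scalemxAl -scalemxAr eY' mul_scalar_mx mul_mx_scalar.
  rewrite -mulmxA r1 !mulmxBr -scalemxAr eY' mul_mx_scalar -(C1 hxy).
  by [].
have h2 : M *m G' = Zmat (fun n => (eta * y n + beta)^-1) *m Jm y x.
  rewrite -h1 !mulmxA Zmat_lin Zmat_mul (@Zmat_ext _ _ _ (fun _ => 1)) ?Zmat1 ?mul1mx //.
  by move=> n; rewrite mulVf.
have eG' : G' = Zmat (fun m => (eta * x m + beta)^-1) *m Jm y x.
  by rewrite -[G'](mulKmx uM) h2 -(C2 xi a0 hy hx hxy) -!mulmxA mulKmx.
have eW' : cj Q W = a *: Zmat x + b%:M + gamma *: Jm y x.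
  rewrite rW !cjD !cjZ cjM // !cjD !cjZ !cjC // eX' -/G' eG' -scalemxAr mulmxA.
  rewrite [eta *: Zmat x + _]Zmat_lin Zmat_mul.
  rewrite (@Zmat_ext _ _ (fun n => (eta * x n + beta) / (eta * x n + beta)) (fun _ => 1)) ?Zmat1 ?mul1mx //.
  by move=> n; rewrite mulfV.
set A' := a *: Zmat x + b%:M + gamma *: Jm y x.
set M' := Mc x w.
have eig : A' *m M' = M' *m Zmat w.
  rewrite /A' mulmxDl Zmat_lin -scalemxAl /Zmat mul_diag_mx mul_mx_diag.
  apply/matrixP => k m; rewrite !mxE.
  under eq_bigr do rewrite !mxE.
  have hs : \sum_(j < N) ghat a b eta beta y x j *
       (ghat a b eta beta x w m / (w m - a * x j - b))
      = ghat a b eta beta x w m * gamma^-1.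
    rewrite -(hrec m) mulr_sumr; apply: eq_bigr => j _; by rewrite mulrCA.
  rewrite hs; have := hwx m k; move=> hd; field.
  by rewrite hd g0.
have uM' : M' \in unitmx.
  rewrite -unitmx_tr; apply: (@eigen_unit _ _ A'^T _ w wi).
  - move=> m; apply/eqP => /matrixP /(_ 0 m); rewrite !mxE => /eqP; apply/negP.
    by rewrite mulf_neq0 ?invr_eq0.
  - by rewrite -trmx_mul eig trmx_mul Zmat_tr.
split => //.
have eA : A' = M' *m Zmat w *m invmx M' by rewrite -eig mulmxK.
by rewrite -(cjK W uQ) eW' -/A' eA invmxM' // !mulmxA.
Qed.

End P6.
Section P7.
Variables (C : numClosedFieldType) (N : nat).

Lemma ghat_nz (a b eta beta gamma : C) (z : nat -> 'I_N -> C) l :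
  a != 0 -> gamma != 0 ->
  (forall l (n m : 'I_N), n != m -> z l n != z l m) ->
  (forall l (n : 'I_N), eta * z l n + beta != 0) ->
  (forall l (n k : 'I_N), z l.+1 n - a * z l k - b != 0) ->
  (forall l (n : 'I_N),
     \sum_(k < N) ghat a b eta beta (z l) (z l.+1) k
                   / (z l.+2 n - a * z l.+1 k - b) = gamma^-1) ->
  forall m, ghat a b eta beta (z l) (z l.+1) m != 0.
Proof.
move=> a0 g0 hd hb hden hrec m; apply/negP => /eqP g0m.
have [j jm tj] : exists2 j, j != m & eta * z l.+1 j + a * beta - b * eta = 0.
  move: g0m; rewrite /ghat => /eqP; rewrite !mulf_eq0 invr_eq0 expf_eq0 (negbTE a0).
  rewrite andbF (negbTE (hb _ _)) /=.
  case/orP => /prodf_eq0 [j Pj].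
    by rewrite mulf_eq0 invr_eq0 (negbTE (hden _ _ _)) (negbTE (hb _ _)).
  rewrite mulf_eq0 invr_eq0 => /orP [tj|]; first by exists j => //; apply/eqP.
  by rewrite subr_eq0 eq_sym (negbTE (hd _ _ _ Pj)).
have gk : forall k, k != j -> ghat a b eta beta (z l) (z l.+1) k = 0.
  move=> k kj; apply/eqP; rewrite /ghat mulf_eq0; apply/orP; right.
  apply/prodf_eq0; exists j; first by rewrite eq_sym.
  by rewrite mulf_eq0; apply/orP; left; apply/eqP; exact: tj.
have key : forall n, ghat a b eta beta (z l) (z l.+1) j
    / (z l.+2 n - a * z l.+1 j - b) = gamma^-1.
  move=> n; rewrite -(hrec l n) (bigD1 j) //= big1 ?addr0 //.
  by move=> k kj; rewrite gk // mul0r.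
have gn : ghat a b eta beta (z l) (z l.+1) j != 0.
  by apply/eqP => e; move: (key j); rewrite e mul0r => /esym/eqP; rewrite invr_eq0 (negbTE g0).
have := key j; rewrite -(key m) => /(mulfI gn) /invr_inj /addIr /addIr /eqP.
by apply/negP; apply: hd.
Qed.

End P7.
Unset Implicit Arguments.

Theorem proposition2p4p1 (C : numClosedFieldType) (N : nat)
    (alpha beta gamma eta rho a b : C) (z : nat -> 'I_N -> C) :
  (0 < N)%N ->
  beta != 0 -> gamma != 0 -> gamma != 1 ->
  a = alpha + eta * rho / (1 - gamma) ->
  b = beta * rho / (1 - gamma) ->
  a != 0 ->
  (forall l (n m : 'I_N), n != m -> z l n != z l m) ->
  (forall l (n : 'I_N), eta * z l n + beta != 0) ->
  (forall l (n k : 'I_N), z l.+1 n - a * z l k - b != 0) ->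
  M0 a b eta beta z \in unitmx ->
  eta *: Zmat (z 0%N) + beta%:M \in unitmx ->
  (forall l (n : 'I_N),
     \sum_(k < N) ghat a b eta beta (z l) (z l.+1) k
                   / (z l.+2 n - a * z l.+1 k - b) = gamma^-1) ->
  forall l : nat,
    char_poly (Umat alpha a b eta beta gamma z l)
    = \prod_(n < N) ('X - (z l n)%:P).
Proof.
move=> N0 b0 g0 g1 ea eb a0 hd hb hden uM0 uZ hrec.
have inj : forall l, injective (z l).
  move=> l i j e; case: (eqVneq i j) => // ij.
  by move: (hd l i j ij); rewrite e eqxx.
have base : Umat alpha a b eta beta gamma z 1 =
    M0 a b eta beta z *m Zmat (z 1%N) *m invmx (M0 a b eta beta z).
  rewrite UmatS' // expr0 mul1r Umat0 /Bmat scalerBr scalerA mulVf // scale1r.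
  rewrite scale_scalar_mx mulmxBr mul_mx_scalar /V0 mulKVmx //.
  move: (M0 a b eta beta z *m Zmat (z 1%N) *m invmx (M0 a b eta beta z)) => K.
  apply/matrixP => i j; rewrite !mxE.
  have g1' : 1 - gamma != 0 by rewrite subr_eq0 eq_sym.
  case: (i == j); rewrite ?mulr1n ?mulr0n ea eb; field; by rewrite g1' b0.
set U := Umat alpha a b eta beta gamma z.
set B := Bmat alpha a b eta beta z.
have inv : forall l, exists2 P, P \in unitmx &
   [/\ Mc a b eta beta (z l) (z l.+1) \in unitmx,
        U l = P *m Zmat (z l) *m invmx P &
        U l.+1 = (P *m Mc a b eta beta (z l) (z l.+1)) *m Zmat (z l.+1)
                   *m invmx (P *m Mc a b eta beta (z l) (z l.+1))].
  elim=> [|l [P uP [uM eY eX]]].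
    exists 1%:M; first exact: unitmx1.
    split; first exact: uM0.
      by rewrite /U Umat0 mul1mx invmx1 mulmx1.
    by rewrite !mul1mx; exact: base.
  exists (P *m Mc a b eta beta (z l) (z l.+1)); first by rewrite unitmx_mul uP uM.
  have rX := UmatS' alpha a b eta gamma z l b0.
  have rW := UmatS' alpha a b eta gamma z l.+1 b0.
  rewrite exprS -mulrA -scalerA in rW.
  have [uM' eW] := step (inj l.+1) (inj l.+2) a0 g0 (hb l) (hb l.+1)
     (hden l) (hden l.+1) (hrec l)
     (ghat_nz l.+1 a0 g0 hd hb hden hrec) uP uM eY eX rX rW.
  by split.
move=> l; have [P uP [_ eY _]] := inv l.
by rewrite eY char_poly_conj // char_poly_Zmat.
Qed.
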